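(* For all integers $\ell\ge 5$ and $b\ge 5$ there exists a planar graph $G$ that contains no subgraph isomorphic to $K_4$ or to $B_b$, contains no subgraph isomorphic to $C_k$ for any $5\le k\le \ell$, and is not properly $3$-colorable.
   Context: $K_n$ is the complete graph and $C_n$ the cycle on $n$ vertices. For $n\ge 3$, the book $B_n$ is the graph on $n$ vertices consisting of $n-2$ triangles sharing one common edge. *)

(* Defs.v *)
From Stdlib Require Rdefinitions.
From HB Require Import structures.
From mathcomp Require Import all_boot all_order all_algebra.
From mathcomp Require Import all_classical all_reals all_analysis.
From mathcomp Require Import Rstruct Rstruct_topology.

Set Implicit Arguments.
Unset Strict Implicit.
Unset Printing Implicit Defensive.

Import Order.TTheory GRing.Theory Num.Theory.

Definition simple_graph (T : finType) (e : rel T) : Prop :=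
  symmetric e /\ irreflexive e.

Definition contains_subgraph (U : finType) (h : rel U) (T : finType) (e : rel T) : Prop :=
  exists f : U -> T, injective f /\ forall x y, h x y -> e (f x) (f y).

Definition K_rel (n : nat) : rel 'I_n := fun i j => i != j.

(* Cycle C_n on 'I_n (a cycle for n >= 3): i ~ i+1 mod n. *)
Definition C_rel (n : nat) : rel 'I_n :=
  fun i j => (i != j) &&
    ((nat_of_ord j == (nat_of_ord i).+1 %% n) || (nat_of_ord i == (nat_of_ord j).+1 %% n)).

(* Book B_n on 'I_n (n >= 3): spine edge {0,1}, and both 0 and 1 adjacent to
   every other vertex; i.e. n-2 triangles sharing the edge {0,1}. *)
Definition B_rel (n : nat) : rel 'I_n :=
  fun i j => (i != j) && ((nat_of_ord i < 2) || (nat_of_ord j < 2)).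

Definition three_colorable (T : finType) (e : rel T) : Prop :=
  exists c : T -> 'I_3, forall x y, e x y -> c x != c y.

Local Open Scope classical_set_scope.
Local Open Scope ring_scope.

Definition unit_I : set Rdefinitions.R := [set t : Rdefinitions.R | (0 <= t <= 1)%R].
Definition open_unit_I : set Rdefinitions.R := [set t : Rdefinitions.R | (0 < t < 1)%R].

(* Arcs are indexed by
   ordered pairs; the disjointness requirement concerns only pairs of
   different (unordered) edges. *)
Definition planar (T : finType) (e : rel T) : Prop :=
  exists (pos : T -> (Rdefinitions.R * Rdefinitions.R)%type) (arc : T -> T -> Rdefinitions.R -> (Rdefinitions.R * Rdefinitions.R)%type),
    injective pos /\
    forall x y, e x y ->
      [/\ {within unit_I, continuous (arc x y)},
          arc x y 0%R = pos x /\ arc x y 1%R = pos y,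
          {in unit_I &, injective (arc x y)},
          (forall t z, open_unit_I t -> arc x y t <> pos z) &
          (forall u v s t, e u v -> ~ ([set x; y] = [set u; v] :> set T) ->
             open_unit_I s -> open_unit_I t -> arc x y s <> arc u v t)].

(* Main.v *)
Require Import Defs.
From Stdlib Require Rdefinitions.
From HB Require Import structures.
From mathcomp Require Import all_boot all_order all_algebra.
From mathcomp Require Import all_classical all_reals all_analysis.
From mathcomp Require Import Rstruct Rstruct_topology.
From mathcomp Require Import lra zify.
Import Order.TTheory GRing.Theory Num.Theory.
Import numFieldNormedType.Exports.

Set Implicit Arguments.
Unset Strict Implicit.
Unset Printing Implicit Defensive.

Notation Vt N := ('I_(N.*2).+1 * bool)%type.

Definition valid N (x : Vt N) : bool := odd x.1 || ~~ x.2.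
Definition nearb (a b : nat) : bool := (a <= b.+1) && (b <= a.+1).
Definition closingb N (a b : nat) : bool :=
  ((a == 0) && (b == N.*2)) || ((a == N.*2) && (b == 0)).
Definition ge N : rel (Vt N) := fun x y =>
  [&& x != y, valid x, valid y & nearb x.1 y.1 || closingb N x.1 y.1].
Arguments ge : clear implicits.

Definition nearA (p q : nat) := p <= q+1 /\ q <= p+1.
Definition closA N (p q : nat) := (p = 0 /\ q = N.*2) \/ (p = N.*2 /\ q = 0).
Definition dif (p q : nat) (c d : bool) := p <> q \/ c <> d.

Ltac clear_dif := repeat match goal with H : ?a <> ?a \/ _ |- _ => destruct H as [H|H]; [now auto|]
 | H : _ \/ ?a <> ?a |- _ => destruct H as [H|H]; [|now auto]
 | H : _ \/ true <> false |- _ => clear H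
 | H : _ \/ false <> true |- _ => clear H end.

Lemma vx_eq N (x y : Vt N) : x.1 = y.1 :> nat -> x.2 = y.2 -> x = y.
Proof. case: x y => [a c] [a' c'] /= h ->; congr pair; exact: val_inj. Qed.

Lemma dif_neq N (x y : Vt N) : x <> y -> dif x.1 y.1 x.2 y.2.
Proof.
move=> ne; rewrite /dif; case: (eqVneq (x.1 : nat) y.1) => [h|h].
  by right => h2; apply: ne; apply: vx_eq.
by left; apply/eqP.
Qed.

Lemma validA N (x : Vt N) : valid x -> x.2 -> odd x.1.
Proof. by rewrite /valid => + h; rewrite h orbF. Qed.

Lemma geA N (x y : Vt N) : ge N x y ->
  [/\ x.2 -> odd x.1, y.2 -> odd y.1, dif x.1 y.1 x.2 y.2 & nearA x.1 y.1 \/ closA N x.1 y.1].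
Proof.
case/and4P => ne vx vy nc; split; try exact: validA.
  by apply: dif_neq => h; move: ne; rewrite h eqxx.
rewrite /nearA /closA; case/orP: nc => [/andP [h1 h2]|/orP [/andP [/eqP h1 /eqP h2]|/andP [/eqP h1 /eqP h2]]].
- left; lia.
- by right; left.
- by right; right.
Qed.

Lemma tip_uniq N (x y : Vt N) : valid x -> valid y -> x.1 = y.1 :> nat -> ~~ odd x.1 -> x = y.
Proof.
move=> vx vy h ho; apply: vx_eq => //.
move: vx vy; rewrite /valid -h (negbTE ho) /= => /negbTE -> /negbTE -> //.
Qed.

Lemma ge_sym N : symmetric (ge N).
Proof.
move=> x y; rewrite /ge eq_sym.
have -> : nearb x.1 y.1 = nearb y.1 x.1 by rewrite /nearb andbC.
have -> : closingb N x.1 y.1 = closingb N y.1 x.1 by rewrite /closingb orbC andbC [X in _ || X]andbC.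
by case: (y != x) (valid x) (valid y) => [] [] [].
Qed.

Lemma tri_arith N (p q r : nat) (c d e : bool) : 2 <= N ->
  (c -> odd p) -> (d -> odd q) -> (e -> odd r) ->
  dif p q c d -> dif p r c e -> dif q r d e ->
  nearA p q \/ closA N p q -> nearA p r \/ closA N p r -> nearA q r \/ closA N q r -> nearA p q.
Proof.
rewrite /dif /nearA /closA.
case: c; case: d; case: e => /=; intros; clear_dif; lia.
Qed.

Lemma tri_near N (x y z : Vt N) : 2 <= N -> ge N x y -> ge N x z -> ge N y z -> nearA x.1 y.1.
Proof.
move=> hN /geA [a1 a2 a3 a4] /geA [b1 b2 b3 b4] /geA [c1 c2 c3 c4].
exact: (tri_arith hN a1 a2 b2).
Qed.


Lemma k4_arith (p0 p1 p2 p3 : nat) (c0 c1 c2 c3 : bool) :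
  (c0 -> odd p0) -> (c1 -> odd p1) -> (c2 -> odd p2) -> (c3 -> odd p3) ->
  dif p0 p1 c0 c1 -> dif p0 p2 c0 c2 -> dif p0 p3 c0 c3 ->
  dif p1 p2 c1 c2 -> dif p1 p3 c1 c3 -> dif p2 p3 c2 c3 ->
  nearA p0 p1 -> nearA p0 p2 -> nearA p0 p3 -> nearA p1 p2 -> nearA p1 p3 -> nearA p2 p3 -> False.
Proof.
rewrite /dif /nearA.
case: c0; case: c1; case: c2; case: c3 => /=; intros; clear_dif; lia.
Qed.

Lemma book_arith (p0 p1 p2 p3 p4 : nat) (c0 c1 c2 c3 c4 : bool) :
  (c0 -> odd p0) -> (c1 -> odd p1) -> (c2 -> odd p2) -> (c3 -> odd p3) -> (c4 -> odd p4) ->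
  dif p0 p1 c0 c1 -> dif p0 p2 c0 c2 -> dif p0 p3 c0 c3 -> dif p0 p4 c0 c4 ->
  dif p1 p2 c1 c2 -> dif p1 p3 c1 c3 -> dif p1 p4 c1 c4 ->
  dif p2 p3 c2 c3 -> dif p2 p4 c2 c4 -> dif p3 p4 c3 c4 ->
  nearA p0 p1 -> nearA p0 p2 -> nearA p0 p3 -> nearA p0 p4 ->
  nearA p1 p2 -> nearA p1 p3 -> nearA p1 p4 -> False.
Proof.
rewrite /dif /nearA.
case: c0; case: c1; case: c2; case: c3; case: c4 => /=; intros; clear_dif; lia.
Qed.

Lemma noK4 N : 2 <= N -> ~ contains_subgraph (@K_rel 4) (ge N).
Proof.
move=> hN [f [finj fe]].
pose o0 := @Ordinal 4 0 isT. pose o1 := @Ordinal 4 1 isT.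
pose o2 := @Ordinal 4 2 isT. pose o3 := @Ordinal 4 3 isT.
have E : forall i j, i != j -> ge N (f i) (f j) by move=> i j h; apply: fe.
have D : forall i j, i != j -> dif (f i).1 (f j).1 (f i).2 (f j).2.
  by move=> i j h; apply: dif_neq => /finj /eqP; rewrite (negbTE h).
have V : forall i, (f i).2 -> odd (f i).1.
  move=> i; have [j hj] : exists j, i != j.
    by case: (eqVneq i o0) => h; [exists o1; rewrite h | exists o0].
  by case/geA: (E _ _ hj).
have Nr : forall i j, i != j -> nearA (f i).1 (f j).1.
  move=> i j h.
  have [k [hk1 hk2]] : exists k, i != k /\ j != k.
    case: (eqVneq i o0) => [->|h0]; case: (eqVneq j o1) => [->|h1].
    - by exists o2.
    - case: (eqVneq j o2) => [->|h2]; first by exists o1.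
      by exists o1; rewrite eq_sym.
    - case: (eqVneq i o2) => [->|h2]; first by exists o0.
      by exists o0.
    - by exists (if (i == o2) || (j == o2) then (if (i == o3) || (j == o3) then o1 else o3) else o2);
        move: h h0 h1; case: i => [[|[|[|[|?]]]] ?]; case: j => [[|[|[|[|?]]]] ?].
  exact: (tri_near hN (E _ _ h) (E _ _ hk1) (E _ _ hk2)).
exact: (k4_arith (V o0) (V o1) (V o2) (V o3) (D o0 o1 isT) (D o0 o2 isT) (D o0 o3 isT)
  (D o1 o2 isT) (D o1 o3 isT) (D o2 o3 isT) (Nr o0 o1 isT) (Nr o0 o2 isT) (Nr o0 o3 isT)
  (Nr o1 o2 isT) (Nr o1 o3 isT) (Nr o2 o3 isT)).
Qed.

Lemma noBook N b : 2 <= N -> 5 <= b -> ~ contains_subgraph (@B_rel b) (ge N).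
Proof.
move=> hN hb [f [finj fe]].
have l4 : forall i, i < 5 -> i < b by move=> i hi; lia.
pose o i (h : i < 5) := Ordinal (l4 i h).
have D : forall i j (hi : i < 5) (hj : j < 5), i != j -> dif (f (o i hi)).1 (f (o j hj)).1 (f (o i hi)).2 (f (o j hj)).2.
  by move=> i j hi hj h; apply: dif_neq => /finj /(congr1 val) /= /eqP; rewrite (negbTE h).
have E : forall i j (hi : i < 5) (hj : j < 5), i != j -> (i < 2) || (j < 2) -> ge N (f (o i hi)) (f (o j hj)).
  by move=> i j hi hj h1 h2; apply: fe; rewrite /B_rel /= h1.
have V : forall i (hi : i < 5), (f (o i hi)).2 -> odd (f (o i hi)).1.
  move=> i hi.
  case: (eqVneq i 0) => [h|h].
    by case/geA: (E i 1 hi isT ltac:(by rewrite h) ltac:(by rewrite h)).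
  by case/geA: (E i 0 hi isT h (orbT _)).
have Nr : forall i j (hi : i < 5) (hj : j < 5), i != j -> (i < 2) || (j < 2) -> nearA (f (o i hi)).1 (f (o j hj)).1.
  move=> i j hi hj h1 h2.
  have [k [hk [hk1 hk2 /andP [hk3 hk4]]]] : exists k (hk : k < 5), [/\ i != k , (i < 2) || (k < 2) & (j != k) && ((j < 2) || (k < 2))].
    move: hi hj h1 h2; case: i => [|[|[|[|[|?]]]]]; case: j => [|[|[|[|[|?]]]]] //= *;
    solve [ exists 0; exists isT; done | exists 1; exists isT; done | exists 2; exists isT; done ].
  exact: (tri_near hN (E _ _ hi hj h1 h2) (E _ _ hi hk hk1 hk2) (E _ _ hj hk hk3 hk4)).
exact: (book_arith (V 0 isT) (V 1 isT) (V 2 isT) (V 3 isT) (V 4 isT)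
  (D 0 1 isT isT isT) (D 0 2 isT isT isT) (D 0 3 isT isT isT) (D 0 4 isT isT isT)
  (D 1 2 isT isT isT) (D 1 3 isT isT isT) (D 1 4 isT isT isT)
  (D 2 3 isT isT isT) (D 2 4 isT isT isT) (D 3 4 isT isT isT)
  (Nr 0 1 isT isT isT isT) (Nr 0 2 isT isT isT isT) (Nr 0 3 isT isT isT isT) (Nr 0 4 isT isT isT isT)
  (Nr 1 2 isT isT isT isT) (Nr 1 3 isT isT isT isT) (Nr 1 4 isT isT isT isT)).
Qed.

Lemma col3 (x y z w : 'I_3) : x != y -> x != z -> y != z -> x != w -> y != w -> z = w.
Proof.
have H : [forall x : 'I_3, forall y : 'I_3, forall z : 'I_3, forall w : 'I_3,
  (x != y) ==> (x != z) ==> (y != z) ==> (x != w) ==> (y != w) ==> (z == w)].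
  by apply/forallP => x'; apply/forallP => y'; apply/forallP => z'; apply/forallP => w';
  case: x' => [[|[|[|?]]] ?]; case: y' => [[|[|[|?]]] ?]; case: z' => [[|[|[|?]]] ?]; case: w' => [[|[|[|?]]] ?].
move=> h1 h2 h3 h4 h5.
move/forallP/(_ x)/forallP/(_ y)/forallP/(_ z)/forallP/(_ w): H.
by rewrite h1 h2 h3 h4 h5 /= => /eqP.
Qed.

Definition mk N (v : nat) (c : bool) : Vt N := (inord v, c).

Lemma mk1 N v c : v <= N.*2 -> (mk N v c).1 = v :> nat.
Proof. by move=> h; rewrite /mk /= inordK. Qed.

Lemma geI N (v w : nat) (c d : bool) : v <= N.*2 -> w <= N.*2 -> (v <> w \/ c <> d) ->
  (c -> odd v) -> (d -> odd w) -> (nearA v w \/ closA N v w) -> ge N (mk N v c) (mk N w d).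
Proof.
move=> hv hw hd hc hd' hn; rewrite /ge /valid /= !inordK //; apply/and4P; split.
- rewrite xpair_eqE -val_eqE /= !inordK //; case: hd => h.
    by move/eqP: h => /negbTE ->.
  by move/eqP: h => /negbTE ->; rewrite andbF.
- by case: (c) hc => [/(_ isT) ->|] //=; rewrite orbT.
- by case: (d) hd' => [/(_ isT) ->|] //=; rewrite orbT.
- rewrite /nearb /closingb; case: hn => [[h1 h2]|[[-> ->]|[-> ->]]].
  + by apply/orP; left; apply/andP; split; lia.
  + by apply/orP; right; rewrite /closingb !eqxx.
  + by apply/orP; right; rewrite /closingb !eqxx orbT.
Qed.

Lemma not3 N : 2 <= N -> ~ three_colorable (ge N).
Proof.
move=> hN [col hc].
have step : forall i, i < N -> col (mk N i.*2 false) = col (mk N (i.*2).+2 false).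
  move=> i hi.
  have hE : forall (v w : nat) (c d : bool), v <= N.*2 -> w <= N.*2 -> (v <> w \/ c <> d) ->
    (c -> odd v) -> (d -> odd w) -> (nearA v w \/ closA N v w) -> col (mk N v c) != col (mk N w d).
    by move=> v w c d *; apply: hc; apply: geI.
  by apply: (@col3 (col (mk N (i.*2).+1 false)) (col (mk N (i.*2).+1 true)));
    apply: hE; rewrite /nearA ?odd_double //=; try lia; by [right | left; lia].
have all : forall i, i <= N -> col (mk N 0 false) = col (mk N i.*2 false).
  elim=> [//|i IH] hi; rewrite IH; last lia; rewrite step //; lia.
have hg : ge N (mk N 0 false) (mk N N.*2 false).
  apply: geI => //; first (left; lia); right; left; done.
by move: (hc _ _ hg); rewrite -(all N (leqnn _)) eqxx.
Qed.


Lemma walk_bound (g : nat -> nat) a n : (forall i, a <= i < a + n -> nearA (g i) (g i.+1)) ->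
  g (a + n) <= g a + n /\ g a <= g (a + n) + n.
Proof.
elim: n => [|n IH] h; first by rewrite addn0; lia.
have [h1 h2] : g (a + n) <= g a + n /\ g a <= g (a + n) + n.
  by apply: IH => i hi; apply: h; lia.
have := h (a + n); rewrite /nearA addnS => /(_ ltac:(lia)); lia.
Qed.

Lemma ivt_up (g : nat -> nat) a n v : (forall i, a <= i < a + n -> nearA (g i) (g i.+1)) ->
  g a <= v -> v <= g (a + n) -> exists i, a <= i <= a + n /\ g i = v.
Proof.
elim: n => [|n IH] h h1 h2.
  by exists a; split; [lia | move: h2; rewrite addn0; lia].
case: (leqP v (g (a + n))) => h3.
  have [i [hi1 hi2]] := IH (fun i hi => h i ltac:(lia)) h1 h3.
  by exists i; split => //; lia.
exists (a + n.+1); split; first lia.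
have := h (a + n); rewrite /nearA addnS => /(_ ltac:(lia)); move: h2; rewrite addnS; lia.
Qed.

Lemma ivt_dn (g : nat -> nat) a n v : (forall i, a <= i < a + n -> nearA (g i) (g i.+1)) ->
  v <= g a -> g (a + n) <= v -> exists i, a <= i <= a + n /\ g i = v.
Proof.
elim: n => [|n IH] h h1 h2.
  by exists a; split; [lia | move: h2; rewrite addn0; lia].
case: (leqP (g (a + n)) v) => h3.
  have [i [hi1 hi2]] := IH (fun i hi => h i ltac:(lia)) h1 h3.
  by exists i; split => //; lia.
exists (a + n.+1); split; first lia.
have := h (a + n); rewrite /nearA addnS => /(_ ltac:(lia)); move: h2; rewrite addnS; lia.
Qed.

Definition code (Q p : nat) (c : bool) : nat := if c then 3 else p - Q.

Lemma code_lt (Q P p : nat) (c : bool) : Q <= p <= P -> P <= Q + 2 -> code Q p c < 4.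
Proof. by rewrite /code; case: c => //; lia. Qed.

Lemma code_neq (Q P p q : nat) (c d : bool) : Q <= p <= P -> Q <= q <= P -> P <= Q + 2 ->
  (P = Q + 2 -> ~~ odd Q) -> (c -> odd p) -> (d -> odd q) -> dif p q c d ->
  code Q p c <> code Q q d.
Proof.
rewrite /dif /code; case: c; case: d => /=; intros; clear_dif; lia.
Qed.


Lemma noCycle N k : 2 <= N -> 5 <= k <= N -> ~ contains_subgraph (@C_rel k) (ge N).
Proof.
move=> hN /andP [hk5 hkN] [f [finj fe]].
have k0 : 0 < k by lia.
pose F i := f (Ordinal (ltn_pmod i k0)).
have Fe : forall i, ge N (F i) (F i.+1).
  move=> i; apply: fe; rewrite /C_rel -val_eqE /=.
  have e1 : i.+1 %% k = (i %% k).+1 %% k by rewrite -addn1 -modnDml addn1.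
  rewrite e1 (eqxx ((i %% k).+1 %% k)) orTb andbT.
  have : i %% k < k := ltn_pmod i k0.
  move: (i %% k) => r hr.
  case: (ltnP r.+1 k) => h; first by rewrite (modn_small h) neq_ltn ltnSn.
  have -> : r.+1 = k by lia.
  rewrite modnn; apply/eqP; lia.
have Fmod : forall i, F (i + k) = F i.
  by move=> i; rewrite /F; congr f; apply: val_inj; rewrite /= modnDr.
have Fmodv : forall i, F (i %% k) = F i.
  by move=> i; rewrite /F; congr f; apply: val_inj; rewrite /= modn_mod.
have Fdist : forall i d, 0 < d < k -> F (i + d) <> F i.
  move=> i d hd /finj /(congr1 val) /= /eqP.
  by rewrite -{2}(addn0 i) eqn_modDl mod0n modn_small; lia.
have V : forall i, valid (F i) by move=> i; case/and4P: (Fe i).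
pose p i := nat_of_ord (F i).1.
have Near : forall i, nearA (p i) (p i.+1).
  move=> i0; case: (geA (Fe i0)) => _ _ _ [//|hc0]; exfalso.
  have hc : closA N (p i0) (p i0.+1) := hc0.
  have ev : forall j, closA N (p j) (p j.+1) -> ~~ odd (p j) /\ ~~ odd (p j.+1).
    by move=> j; rewrite /closA => -[[-> ->]|[-> ->]]; rewrite odd_double.
  have hnear : forall j, i0.+1 <= j < i0.+1 + k.-1 -> nearA (p j) (p j.+1).
    move=> j hj; case: (geA (Fe j)) => _ _ _ [//|hcj0]; exfalso.
    have hcj : closA N (p j) (p j.+1) := hcj0.
    have [evj evj'] := ev _ hcj.
    have [evi evi'] := ev _ hc.
    have : p j = p i0 \/ p j = p i0.+1 by move: hc hcj; rewrite /closA; move: (p j) (p j.+1) (p i0) (p i0.+1) => ? ? ? ?; lia.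
    case=> e.
      apply: (Fdist i0 (j - i0)); first lia.
      rewrite (_ : i0 + (j - i0) = j); last lia.
      by apply: tip_uniq (V _) (V _) e evj.
    have E : F j = F i0.+1 by apply: tip_uniq (V _) (V _) e evj.
    case: (eqVneq j i0.+1) => hji; last first.
      apply: (Fdist i0.+1 (j - i0.+1)); first lia.
      by rewrite (_ : i0.+1 + (j - i0.+1) = j); [exact: E | lia].
    subst j.
    have e2 : p i0.+2 = p i0 by move: hc hcj; rewrite /closA; move: (p i0.+2) (p i0.+1) (p i0) => ? ? ?; lia.
    apply: (Fdist i0 2); first lia.
    by rewrite addn2; apply: tip_uniq (V _) (V _) e2 evj'.
  have [b1 b2] := walk_bound hnear.
  have e : i0.+1 + k.-1 = i0 + k by lia.
  have e3 : p (i0 + k) = p i0 by rewrite /p Fmod.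
  move: b1 b2; rewrite e e3; move: hc; rewrite /closA; move: (p i0) (p i0.+1) => ? ?; lia.
case: (@arg_minnP _ (Ordinal k0) predT (fun i : 'I_k => p i) isT) => m _ hm.
case: (@arg_maxnP _ (Ordinal k0) predT (fun i : 'I_k => p i) isT) => M _ hM.
have pmin : forall i, p m <= p i.
  by move=> i; have := hm (Ordinal (ltn_pmod i k0)) isT; rewrite /p /= Fmodv.
have pmax : forall i, p i <= p M.
  by move=> i; have := hM (Ordinal (ltn_pmod i k0)) isT; rewrite /p /= Fmodv.
pose g i := p (m + i).
have gN : forall i, nearA (g i) (g i.+1) by move=> i; rewrite /g addnS; exact: Near.
pose J := (M + (k - m)) %% k.
have hJ : J < k := ltn_pmod _ k0.
have mk' : (m : nat) < k := ltn_ord m.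
have gJ : g J = p M.
  have : F (m + J) = F M.
    rewrite -Fmodv -[in RHS]Fmodv; congr F.
    by rewrite /J modnDmr (_ : m + (M + (k - m)) = M + k) ?modnDr //; lia.
  by rewrite /g /p => ->.
have gk : g k = g 0 by rewrite /g /p addn0 Fmod.
have gmin : forall i, g 0 <= g i by move=> i; rewrite /g addn0; exact: pmin.
have gmax : forall i, g i <= g J by move=> i; rewrite gJ; exact: pmax.
have oddi : forall v, g 0 < v < g J -> odd v.
  move=> v /andP [h1 h2].
  have [i1 [hi1 e1]] := @ivt_up g 0 J v (fun i _ => gN i) (ltnW h1) (ltnW h2).
  have [i2 [hi2 e2]] : exists i, J <= i <= J + (k - J) /\ g i = v.
    apply: (@ivt_dn g J (k - J) v (fun i _ => gN i) (ltnW h2)).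
    by rewrite subnKC ?(ltnW hJ) // gk ltnW.
  have n10 : i1 != 0 by apply/eqP => h; move: e1 h1; rewrite h => ->; rewrite ltnn.
  have n1J : i1 != J by apply/eqP => h; move: e1 h2; rewrite h => ->; rewrite ltnn.
  have n2J : i2 != J by apply/eqP => h; move: e2 h2; rewrite h => ->; rewrite ltnn.
  have n2k : i2 != k by apply/eqP => h; move: e2 h1; rewrite h gk => ->; rewrite ltnn.
  apply/negPn/negP => ev.
  have ev2 : ~~ odd (g i2) by rewrite e2.
  apply: (Fdist (m + i1) (i2 - i1)); first lia.
  rewrite (_ : m + i1 + (i2 - i1) = m + i2); last lia.
  exact: (tip_uniq (V _) (V _) (etrans e2 (esym e1)) ev2).
have D : forall i j, i < j < 5 -> dif (F (m + i)).1 (F (m + j)).1 (F (m + i)).2 (F (m + j)).2.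
  move=> i j hij; apply: dif_neq => h.
  apply: (Fdist (m + i) (j - i)); first lia.
  by rewrite (_ : m + i + (j - i) = m + j); [rewrite h | lia].
have W : forall i, g 0 <= g i <= g J by move=> i; rewrite gmin gmax.
have O : forall i, (F (m + i)).2 -> odd (F (m + i)).1 by move=> i; apply: validA (V _).
have [PQ1 PQ2] : g J <= g 0 + 2 /\ (g J = g 0 + 2 -> ~~ odd (g 0)).
  have o1 : (g 0).+1 < g J -> odd (g 0).+1 by move=> h; apply: oddi; rewrite ltnSn.
  have o2 : (g 0).+2 < g J -> odd (g 0).+2 by move=> h; apply: oddi; rewrite h andbT; lia.
  move: o1 o2; move: (g 0) (g J) => a b; lia.
pose h := fun i : 'I_5 => (inord (code (g 0) (g i) (F (m + i)).2) : 'I_4).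
have hinj : injective h.
  move=> i j /(congr1 val) /=; rewrite !inordK; try (apply: (@code_lt _ (g J)) => //; exact: W).
  move=> e; apply/eqP; apply: contraT => ne; exfalso.
  have D' : dif (g i) (g j) (F (m + i)).2 (F (m + j)).2.
    case: (ltngtP i j) => hij.
    - by apply: D; rewrite hij ltn_ord.
    - have : dif (g j) (g i) (F (m + j)).2 (F (m + i)).2 by apply: D; rewrite hij ltn_ord.
      rewrite /dif; intuition.
    - by move: ne; rewrite (val_inj hij) eqxx.
  exact: (code_neq (W i) (W j) PQ1 PQ2 (O i) (O j) D' e).
by have := leq_card h hinj; rewrite !card_ord.
Qed.


Section Plan.
Local Open Scope classical_set_scope.
Local Open Scope ring_scope.
Local Notation RR := Rdefinitions.R.

Lemma aff_cont_gen (K : realType) (a c : K) : continuous (fun t : K => a + t * c).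
Proof. move=> t. apply: cvgD. exact: cvg_cst. apply: cvgMl. exact: cvg_id. Qed.

Definition seg (P Q : RR * RR) (t : RR) : RR * RR :=
  (P.1 + t * (Q.1 - P.1), P.2 + t * (Q.2 - P.2)).

Lemma seg_cont P Q : continuous (seg P Q).
Proof.
move=> t; apply: (@cvg_pair _ _ _ _ (nbhs (seg P Q t).1) (nbhs (seg P Q t).2)) => /=.
- exact: (@aff_cont_gen RR).
- exact: (@aff_cont_gen RR).
Qed.

Lemma seg_swap P Q t : seg P Q t = seg Q P (1 - t).
Proof. by rewrite /seg; congr pair; lra. Qed.

Lemma seg_inj P Q s t : P <> Q -> seg P Q s = seg P Q t -> s = t.
Proof.
case: P Q => [p1 p2] [q1 q2] /= hne [/addrI h1 /addrI h2].
case: (eqVneq q1 p1) => e1.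
  case: (eqVneq q2 p2) => e2; first by case: hne; rewrite e1 e2.
  by apply: (mulIf _ h2); rewrite subr_eq0.
by apply: (mulIf _ h1); rewrite subr_eq0.
Qed.

Definition yc N (x : Vt N) : RR :=
  if x.2 then (if odd x.1 then -2 else 1)
  else (if odd x.1 then -1 else if ((x.1 == 0 :> nat) || (x.1 == N.*2 :> nat))%N then 0 else -1).

Definition pt N (x : Vt N) : RR * RR := ((x.1 : nat)%:R, yc x).

Lemma pt_inj N : injective (@pt N).
Proof.
move=> x y [h1 h2].
have e1 : (x.1 : nat) = y.1 by apply/eqP; rewrite -(eqr_nat RR) h1.
apply: vx_eq => //; move: h2; rewrite /yc e1.
by case: (x.2); case: (y.2) => //; case: (odd (y.1 : nat)) => //; try case: ifP => _; move=> h; lra.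
Qed.

Lemma yc_vals N (x : Vt N) : [\/ yc x = 1, yc x = 0, yc x = -1 | yc x = -2].
Proof.
rewrite /yc; case: (x.2); case: (odd (x.1 : nat)); try case: ifP => _;
  by [apply: Or41 | apply: Or42 | apply: Or43 | apply: Or44].
Qed.

Lemma yc0 N (x : Vt N) : yc x = 0 -> (x.1 : nat) = 0%N \/ (x.1 : nat) = N.*2.
Proof.
rewrite /yc; case: (x.2); case: (odd (x.1 : nat)) => //; try (move=> h; exfalso; lra).
case: ifP => [/orP [/eqP ->|/eqP ->] _|_ h]; [by left|by right|exfalso; lra].
Qed.

Lemma yc_valid N (x : Vt N) : valid x -> [\/ yc x = 0, yc x = -1 | yc x = -2].
Proof.
rewrite /valid /yc; case: (x.2); case: (odd (x.1 : nat)) => //= _; try case: ifP => _;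
  by [apply: Or31 | apply: Or32 | apply: Or33].
Qed.

Lemma yc_odd N (x : Vt N) : odd x.1 -> yc x = if x.2 then -2 else -1.
Proof. by rewrite /yc => ->; case: (x.2). Qed.

Lemma yc_neg N (x : Vt N) : valid x -> (x.1 : nat) <> 0%N -> (x.1 : nat) <> N.*2 -> yc x < 0.
Proof.
move=> vx h1 h2; case: (yc_valid vx) => h; rewrite h; try lra.
by case: (yc0 h).
Qed.

Definition normE N (x y : Vt N) := ((x.1 : nat) < y.1)%N || (((x.1 : nat) == y.1) && ~~ x.2).

Lemma norm_or N (x y : Vt N) : ge N x y -> normE x y \/ normE y x.
Proof.
case/geA => _ _ hd _; rewrite /normE.
case: (ltngtP (x.1 : nat) y.1) => h; [by left | by right | ].
case: hd => [//|hd]; case: (x.2) hd => hd; [right | left] => //=.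
by move: hd; case: (y.2).
Qed.

Lemma nat_between (a c : nat) : (a%:R : RR) < c%:R -> (c%:R : RR) < a%:R + 1 -> False.
Proof. by rewrite natr1 !ltr_nat; lia. Qed.

Lemma nat_eq_frac (a c : nat) (s t : RR) : 0 < s < 1 -> 0 < t < 1 ->
  (a%:R : RR) + s = c%:R + t -> a = c.
Proof.
move=> /andP [s0 s1] /andP [t0 t1] e.
have h1 : (a%:R : RR) < c%:R + 1 by lra.
have h2 : (c%:R : RR) < a%:R + 1 by lra.
move: h1 h2; rewrite !natr1 !ltr_nat; lia.
Qed.

End Plan.


Section PlanB.
Local Open Scope classical_set_scope.
Local Open Scope ring_scope.
Local Notation RR := Rdefinitions.R.

Lemma yc_tip N (x : Vt N) : valid x -> ~~ odd x.1 -> ((x.1 : nat) = 0%N \/ (x.1 : nat) = N.*2) -> yc x = 0.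
Proof.
rewrite /valid /yc => + ho; rewrite (negbTE ho) /= => /negbTE -> /=.
by case=> ->; rewrite eqxx ?orbT.
Qed.

Lemma edge_cases N (x y : Vt N) : (1 <= N)%N -> ge N x y -> normE x y ->
 [\/ [/\ (x.1:nat) = 0%N, (y.1:nat) = N.*2, yc x = 0 & yc y = 0],
     [/\ (x.1:nat) = y.1, odd x.1, x.2 = false /\ y.2 = true, yc x = -1 & yc y = -2] |
     [/\ (y.1:nat) = (x.1).+1, valid x, valid y, [\/ yc x = 0, yc x = -1 | yc x = -2] /\
         [\/ yc y = 0, yc y = -1 | yc y = -2] & (yc x < 0 \/ yc y < 0)] ].
Proof.
move=> hN e hn; have := e; case/and4P => _ vx vy _.
case/geA: e => ox oy hd hc.
case/orP: hn => [lt | /andP [/eqP eq nx2]].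
  case: hc => [[h1 h2]|[[h1 h2]|[h1 h2]]].
  - have ey : (y.1 : nat) = (x.1).+1 by lia.
    apply: Or33; split => //; first by split; exact: yc_valid.
    case: (boolP (odd x.1)) => o.
      by left; rewrite yc_odd //; case: (x.2); lra.
    by right; rewrite yc_odd ?ey //=; case: (y.2); lra.
  - apply: Or31; split => //; apply: yc_tip => //; rewrite ?h1 ?h2 ?odd_double //; tauto.
  - lia.
have x2 : x.2 = false by move: nx2; case: (x.2).
have y2 : y.2 = true by case: hd => // ; rewrite x2; case: (y.2).
have o : odd x.1 by rewrite eq; apply: oy; rewrite y2.
apply: Or32; split.
- exact: eq.
- exact: o.
- by split.
- by rewrite yc_odd // x2.
- by rewrite yc_odd -?eq // y2.
Qed.

Lemma core_avoid N (x y z : Vt N) s : (1 <= N)%N -> ge N x y -> normE x y -> 0 < s < 1 ->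
  seg (pt x) (pt y) s <> pt z.
Proof.
move=> hN e hn /andP [s0 s1]; rewrite /seg /pt /= => -[EX EY].
have N2 : (0:RR) < (N.*2)%:R by rewrite ltr0n; lia.
case: (edge_cases hN e hn) => [[h1 h2 h3 h4]|[h1 h2 [h3 h4] h5 h6]|[h1 vx vy [h3 h4] h5]].
- rewrite h3 h4 in EY; have : yc z = 0 by lra.
  move/yc0 => hz; move: EX; rewrite h1 h2 mulr0n.
  by case: hz => ->; rewrite ?mulr0n; move: ((N.*2)%:R : RR) N2 => c c0 EX; nra.
- rewrite h5 h6 in EY; case: (yc_vals z) => h; rewrite h in EY; lra.
- move: EX; rewrite h1 -natr1 => EX.
  apply: (@nat_between x.1 z.1); lra.
Qed.

Lemma core_disj N (x y u v : Vt N) s t : (1 <= N)%N -> ge N x y -> normE x y ->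
  ge N u v -> normE u v -> 0 < s < 1 -> 0 < t < 1 ->
  seg (pt x) (pt y) s = seg (pt u) (pt v) t -> x = u /\ y = v.
Proof.
move=> hN e1 n1 e2 n2 hs ht; rewrite /seg /pt /= => -[EX EY].
have := e1; case/and4P => _ vx vy _.
have := e2; case/and4P => _ vu vv _.
move: (hs) (ht) => /andP [s0 s1] /andP [t0 t1].
case: (edge_cases hN e1 n1) => [[a1 a2 a3 a4]|[a1 a2 [a3 a4] a5 a6]|[a1 _ _ [a3 a4] a5]];
case: (edge_cases hN e2 n2) => [[b1 b2 b3 b4]|[b1 b2 [b3 b4] b5 b6]|[b1 _ _ [b3 b4] b5]].
- split; apply: tip_uniq => //; rewrite ?a1 ?b1 ?a2 ?b2 ?odd_double //.
- exfalso; rewrite a3 a4 b5 b6 in EY; lra.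
- exfalso; rewrite a3 a4 in EY; case: b3 => h; rewrite h in EY b5; case: b4 => h'; rewrite h' in EY b5; lra.
- exfalso; rewrite a5 a6 b3 b4 in EY; lra.
- have ex : (x.1 : nat) = u.1.
    by move: EX; rewrite -a1 -b1 !subrr !mulr0 !addr0 => /eqP; rewrite eqr_nat => /eqP.
  split; apply: vx_eq.
  + exact: ex.
  + by rewrite a3 b3.
  + by rewrite -a1 -b1 ex.
  + by rewrite a4 b4.
- exfalso; move: EX; rewrite -a1 b1 -natr1 => EX; apply: (@nat_between u.1 x.1); lra.
- exfalso; rewrite b3 b4 in EY; case: a3 => h; rewrite h in EY a5; case: a4 => h'; rewrite h' in EY a5; lra.
- exfalso; move: EX; rewrite -b1 a1 -natr1 => EX; apply: (@nat_between x.1 u.1); lra.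
- move: EX; rewrite a1 b1 -!natr1 => EX.
  have ex : (x.1 : nat) = u.1 by apply: (nat_eq_frac hs ht); lra.
  have st : s = t by move: EX; rewrite ex; lra.
  subst t.
  have ey : (y.1 : nat) = v.1 by rewrite a1 b1 ex.
  case: (boolP (odd x.1)) => o.
  + have yv : y = v by apply: tip_uniq => //; rewrite a1 /= o.
    subst v.
    have H0 : (1 - s) * (yc x - yc u) = 0.
      by move: EY; rewrite !mulrBr !mulrBl !mul1r; lra.
    have hx : yc x = yc u.
      move/eqP: H0; rewrite mulf_eq0 => /orP [/eqP h|/eqP h]; [exfalso; lra | lra].
    by split => //; apply: pt_inj; rewrite /pt ex hx.
  + have xu : x = u by apply: tip_uniq.
    subst u.
    have H0 : s * (yc y - yc v) = 0.
      by move: EY; rewrite !mulrBr; lra.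
    have hy : yc y = yc v.
      move/eqP: H0; rewrite mulf_eq0 => /orP [/eqP h|/eqP h]; [exfalso; lra | lra].
    by split => //; apply: pt_inj; rewrite /pt ey hy.
Qed.
End PlanB.


Section Plan2.
Local Open Scope classical_set_scope.
Local Open Scope ring_scope.
Local Notation RR := Rdefinitions.R.

Lemma normalize N (x y : Vt N) s : ge N x y -> 0 < s < 1 ->
  exists x' y' s', [/\ normE x' y', ge N x' y', 0 < s' < 1,
     ([set x; y] : set (Vt N)) = [set x'; y'] & seg (pt x) (pt y) s = seg (pt x') (pt y') s'].
Proof.
move=> e /andP [s0 s1]; case: (norm_or e) => hn.
  by exists x, y, s; split => //; apply/andP.
exists y, x, (1 - s); split => //.
- by rewrite ge_sym.
- by apply/andP; split; lra.
- exact: setUC.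
- exact: seg_swap.
Qed.

Lemma planar_ge N : (1 <= N)%N -> planar (ge N).
Proof.
move=> hN.
exists (@pt N), (fun x y => seg (pt x) (pt y)); split; first exact: (@pt_inj N).
move=> x y exy; split.
- apply: continuous_subspaceT; exact: seg_cont.
- by rewrite /seg; case: (pt x) (pt y) => [a b] [c d] /=; split; congr pair; lra.
- move=> s t _ _; apply: seg_inj => /(@pt_inj N) h.
  by move: exy; rewrite h /ge eqxx.
- move=> t z ht.
  have [x' [y' [s' [n1 e1 hs' _ ->]]]] := normalize exy ht.
  exact: core_avoid.
- move=> u v s t euv hne hs ht E.
  have [x' [y' [s' [n1 e1 hs' S1 E1]]]] := normalize exy hs.
  have [u' [v' [t' [n2 e2 ht' S2 E2]]]] := normalize euv ht.
  apply: hne; rewrite S1 S2.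
  have [-> ->] := core_disj hN e1 n1 e2 n2 hs' ht' (etrans (esym E1) (etrans E E2)).
  by [].
Qed.
End Plan2.


Theorem mainTheorem3 (l b : nat) :
  5 <= l -> 5 <= b ->
  exists (T : finType) (e : rel T),
    [/\ simple_graph e /\ planar e,
        ~ contains_subgraph (@K_rel 4) e,
        ~ contains_subgraph (@B_rel b) e,
        (forall k, 5 <= k <= l -> ~ contains_subgraph (@C_rel k) e) &
        ~ three_colorable e].
Proof.
move=> hl hb.
exists ('I_(l.*2).+1 * bool)%type, (ge l); split.
- split; last by apply: planar_ge; lia.
  by split; [exact: ge_sym | move=> x; rewrite /ge eqxx].
- by apply: noK4; lia.
- by apply: noBook => //; lia.
- by move=> k hk; apply: noCycle => //; lia.
- by apply: not3; lia.
Qed.
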